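(* Let $\mathfrak{L}$ be a language, $M,N$ $\mathfrak{L}$-structures and $n\ge0$. Then ${\rm Th}_{\exists^{n+1}}(M)\subseteq{\rm Th}_{\exists^{n+1}}(N)$ if and only if for every $a\in M$ there exist an elementary extension $N\prec N^*$ and $b\in N^*$ such that ${\rm Th}_{\exists^n}(M,a)\subseteq{\rm Th}_{\exists^n}(N^*,b)$, where $(M,a)$ and $(N^*,b)$ are regarded as $\mathfrak{L}(c)$-structures with $c$ a new constant symbol interpreted as $a$ resp. $b$.
   Context: The fragments $\exists^n$ are defined inductively: $\exists^0$-formulas are the quantifier-free formulas, and an $\exists^{n}$-formula ($n\ge1$) is a formula of the form $\psi$ or $\exists x\,\psi$ with $\psi$ a positive boolean combination of $\exists^{n-1}$-formulas. ${\rm Th}_{\exists^n}(M)$ is the set of positive boolean combinations of $\exists^n$-sentences true in $M$. *)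

(* Defs.v *)
From mathcomp Require Import all_boot.
Set Implicit Arguments. Unset Strict Implicit. Unset Printing Implicit Defensive.

Record Lang := {
  Fun : Type;
  Rel : Type;
  farity : Fun -> nat;
  rarity : Rel -> nat }.

Record Struc (L : Lang) := {
  dom : Type;
  dom_inhabited : inhabited dom;
  finterp : forall f : Fun L, ('I_(farity f) -> dom) -> dom;
  rinterp : forall r : Rel L, ('I_(rarity r) -> dom) -> Prop }.

Arguments dom {L} s.
Arguments dom_inhabited {L} s.
Arguments finterp {L} s f _.
Arguments rinterp {L} s r _.
Arguments farity {l} f.
Arguments rarity {l} r.

(** Terms and formulas, variables as de Bruijn indices. *)
Inductive term (L : Lang) : Type :=
  | Tvar : nat -> term L
  | Tapp (f : Fun L) : ('I_(farity f) -> term L) -> term L.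

Inductive form (L : Lang) : Type :=
  | Ftrue : form L
  | Ffalse : form L
  | Feq : term L -> term L -> form L
  | Frel (r : Rel L) : ('I_(rarity r) -> term L) -> form L
  | Fnot : form L -> form L
  | Fand : form L -> form L -> form L
  | For : form L -> form L -> form L
  | Fex : form L -> form L
  | Fall : form L -> form L.

Arguments Tvar {L}.
Arguments Ftrue {L}.
Arguments Ffalse {L}.

Definition scons (D : Type) (a : D) (env : nat -> D) : nat -> D :=
  fun k => match k with 0 => a | S m => env m end.

Fixpoint eval (L : Lang) (M : Struc L) (env : nat -> dom M) (t : term L)
  : dom M :=
  match t with
  | Tvar k => env k
  | Tapp f args => finterp M f (fun i => eval env (args i))
  end.

Fixpoint sat (L : Lang) (M : Struc L) (env : nat -> dom M) (phi : form L)
  : Prop :=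
  match phi with
  | Ftrue => True
  | Ffalse => False
  | Feq t u => eval env t = eval env u
  | Frel r args => rinterp M r (fun i => eval env (args i))
  | Fnot p => ~ sat env p
  | Fand p q => sat env p /\ sat env q
  | For p q => sat env p \/ sat env q
  | Fex p => exists a : dom M, sat (scons a env) p
  | Fall p => forall a : dom M, sat (scons a env) p
  end.

Fixpoint closed_term (L : Lang) (k : nat) (t : term L) : Prop :=
  match t with
  | Tvar m => m < k
  | Tapp f args => forall i, closed_term k (args i)
  end.

Fixpoint closed_at (L : Lang) (k : nat) (phi : form L) : Prop :=
  match phi with
  | Ftrue | Ffalse => True
  | Feq t u => closed_term k t /\ closed_term k u
  | Frel r args => forall i, closed_term k (args i)
  | Fnot p => closed_at k p
  | Fand p q | For p q => closed_at k p /\ closed_at k q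
  | Fex p | Fall p => closed_at k.+1 p
  end.

Definition sentence (L : Lang) (phi : form L) : Prop := closed_at 0 phi.

Definition true_in (L : Lang) (M : Struc L) (phi : form L) : Prop :=
  forall env : nat -> dom M, sat env phi.

Fixpoint qf (L : Lang) (phi : form L) : Prop :=
  match phi with
  | Fex _ | Fall _ => False
  | Fnot p => qf p
  | Fand p q | For p q => qf p /\ qf q
  | _ => True
  end.

Inductive PosComb (L : Lang) (P : form L -> Prop) : form L -> Prop :=
  | PC_base phi : P phi -> PosComb P phi
  | PC_and phi psi : PosComb P phi -> PosComb P psi -> PosComb P (Fand phi psi)
  | PC_or phi psi : PosComb P phi -> PosComb P psi -> PosComb P (For phi psi).

Fixpoint En (L : Lang) (n : nat) (phi : form L) : Prop :=
  match n with
  | 0 => qf phi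
  | S m => PosComb (En m) phi \/
           (exists psi, phi = Fex psi /\ PosComb (En m) psi)
  end.

Definition ThE (L : Lang) (n : nat) (M : Struc L) (phi : form L) : Prop :=
  PosComb (fun psi => En n psi /\ sentence psi) phi /\ true_in M phi.

Definition ThE_incl (L : Lang) (n : nat) (M N : Struc L) : Prop :=
  forall phi, ThE n M phi -> ThE n N phi.

(** Elementary extension N < N*, presented as an elementary embedding
    h : N -> N* (N is identified with its image). *)
Definition elementary_embedding (L : Lang) (N Nstar : Struc L)
  (h : dom N -> dom Nstar) : Prop :=
  forall (phi : form L) (env : nat -> dom N),
    sat env phi <-> sat (fun k => h (env k)) phi.

(** The language L(c): L with one new constant symbol c (= [None]). *)
Definition Lc (L : Lang) : Lang := {|
  Fun := option (Fun L);
  Rel := Rel L;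
  farity := fun o => match o with Some f => farity f | None => 0 end;
  rarity := @rarity L |}.

Definition expand (L : Lang) (M : Struc L) (a : dom M) : Struc (Lc L) := {|
  dom := dom M;
  dom_inhabited := dom_inhabited M;
  finterp := fun (o : Fun (Lc L)) =>
    match o return ('I_(@farity (Lc L) o) -> dom M) -> dom M with
    | Some f => fun args => finterp M f args
    | None => fun _ => a
    end;
  rinterp := fun r args => rinterp M r args |}.

(* Main.v *)
Require Import Defs.
From mathcomp Require Import all_boot.
From mathcomp Require classical_sets filter.
From Stdlib Require Import Classical FunctionalExtensionality PropExtensionality ProofIrrelevance ClassicalEpsilon.
Set Implicit Arguments. Unset Strict Implicit.

Lemma ultra_ex (I : Type) (F : (I -> Prop) -> Prop) :
  F (fun _ => True) ->
  (forall A B, F A -> F B -> F (fun i => A i /\ B i)) ->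
  (forall A B : I -> Prop, (forall i, A i -> B i) -> F A -> F B) ->
  (forall A, F A -> exists i, A i) ->
  exists U : (I -> Prop) -> Prop,
    [/\ forall A, F A -> U A,
        (forall A B, U A -> U B -> U (fun i => A i /\ B i)),
        (forall A B : I -> Prop, (forall i, A i -> B i) -> U A -> U B),
        (forall A, U A -> exists i, A i) &
        (forall A, U A \/ U (fun i => ~ A i))].
Proof.
move=> FT FI FS Fne.
have PF : filter.ProperFilter F.
  split.
  - by move=> /Fne [i []].
  - split; [exact: FT | exact: FI | exact: FS].
have [G [UG sFG]] := filter.ultraFilterLemma PF.
have PG : filter.ProperFilter G by case: UG.
exists G; split.
- exact: sFG.
- move=> A B; exact: filter.filterI.
- move=> A B; exact: filter.filterS.
- move=> A GA; apply: Classical_Prop.NNPP => nA.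
  apply: (filter.filter_not_empty G).
  apply: filter.filterS GA => i Ai; apply: nA; by exists i.
- move=> A; exact: filter.in_ultra_setVsetC.
Qed.

Section Gen.
Variable L : Lang.

Lemma eval_ext (M : Struc L) (e1 e2 : nat -> dom M) (t : term L) :
  (forall k, e1 k = e2 k) -> eval e1 t = eval e2 t.
Proof.
move=> He; elim: t => [k|f args IH] /=; first exact: He.
by congr (finterp M f); apply: functional_extensionality => i; apply: IH.
Qed.

Lemma sat_ext (M : Struc L) (phi : form L) : forall (e1 e2 : nat -> dom M),
  (forall k, e1 k = e2 k) -> (sat e1 phi <-> sat e2 phi).
Proof.
elim: phi => [| |t u|r args|p IH|p IHp q IHq|p IHp q IHq|p IH|p IH] e1 e2 He /=.
- by [].
- by [].
- by rewrite (eval_ext t He) (eval_ext u He).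
- have -> : (fun i => eval e1 (args i)) = (fun i => eval e2 (args i)) by
    apply: functional_extensionality => i; apply: eval_ext.
  by [].
- by rewrite (IH e1 e2 He).
- by rewrite (IHp e1 e2 He) (IHq e1 e2 He).
- by rewrite (IHp e1 e2 He) (IHq e1 e2 He).
- have Hs : forall a, sat (scons a e1) p <-> sat (scons a e2) p.
    by move=> a; apply: IH => -[|k] //=.
  by split=> [[a /Hs Ha]|[a /Hs Ha]]; exists a.
- have Hs : forall a, sat (scons a e1) p <-> sat (scons a e2) p.
    by move=> a; apply: IH => -[|k] //=.
  by split=> Ha a; apply/Hs.
Qed.

Lemma eval_closed (M : Struc L) (e1 e2 : nat -> dom M) k (t : term L) :
  closed_term k t -> (forall m, m < k -> e1 m = e2 m) -> eval e1 t = eval e2 t.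
Proof.
move=> Ht He; elim: t Ht => [m|f args IH] /= Ht; first exact: He.
by congr (finterp M f); apply: functional_extensionality => i; apply: IH.
Qed.

Lemma sat_closed (M : Struc L) (phi : form L) : forall k (e1 e2 : nat -> dom M),
  closed_at k phi -> (forall m, m < k -> e1 m = e2 m) -> (sat e1 phi <-> sat e2 phi).
Proof.
elim: phi => [| |t u|r args|p IH|p IHp q IHq|p IHp q IHq|p IH|p IH] k e1 e2 /= Hc He.
- by [].
- by [].
- by case: Hc => Ht Hu; rewrite (eval_closed Ht He) (eval_closed Hu He).
- have -> : (fun i => eval e1 (args i)) = (fun i => eval e2 (args i)) by
    apply: functional_extensionality => i; apply: eval_closed (Hc i) He.
  by [].
- by rewrite (IH k e1 e2 Hc He).
- by case: Hc => H1 H2; rewrite (IHp k e1 e2 H1 He) (IHq k e1 e2 H2 He).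
- by case: Hc => H1 H2; rewrite (IHp k e1 e2 H1 He) (IHq k e1 e2 H2 He).
- have Hs : forall a, sat (scons a e1) p <-> sat (scons a e2) p.
    by move=> a; apply: (IH k.+1) => // -[|m] //= /He.
  by split=> [[a /Hs Ha]|[a /Hs Ha]]; exists a.
- have Hs : forall a, sat (scons a e1) p <-> sat (scons a e2) p.
    by move=> a; apply: (IH k.+1) => // -[|m] //= /He.
  by split=> Ha a; apply/Hs.
Qed.

Lemma closed_term_mono k k' (t : term L) : k <= k' -> closed_term k t -> closed_term k' t.
Proof.
move=> Hk; elim: t => [m|f args IH] /=; first by move=> H; exact: leq_trans H Hk.
by move=> H i; apply: IH.
Qed.

Lemma closed_mono (phi : form L) : forall k k', k <= k' -> closed_at k phi -> closed_at k' phi.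
Proof.
elim: phi => [| |t u|r args|p IH|p IHp q IHq|p IHp q IHq|p IH|p IH] k k' Hk //=.
- by case=> H1 H2; split; apply: closed_term_mono H1 || apply: closed_term_mono H2.
- by move=> H i; apply: closed_term_mono (H i).
- exact: IH.
- by case=> H1 H2; split; [apply: IHp H1|apply: IHq H2].
- by case=> H1 H2; split; [apply: IHp H1|apply: IHq H2].
- by apply: IH; rewrite ltnS.
- by apply: IH; rewrite ltnS.
Qed.

Lemma PosComb_closed (P : form L -> Prop) k phi :
  PosComb P phi -> closed_at k phi -> PosComb (fun x => P x /\ closed_at k x) phi.
Proof.
elim=> [x Px|x y _ IHx _ IHy|x y _ IHx _ IHy] /=.
- by move=> H; apply: PC_base.
- by case=> H1 H2; apply: PC_and; [apply: IHx|apply: IHy].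
- by case=> H1 H2; apply: PC_or; [apply: IHx|apply: IHy].
Qed.

Lemma PosComb_weak (P Q : form L -> Prop) phi :
  (forall x, P x -> Q x) -> PosComb P phi -> PosComb Q phi.
Proof.
move=> H; elim=> [x Px|x y _ IHx _ IHy|x y _ IHx _ IHy].
- by apply: PC_base; apply: H.
- exact: PC_and.
- exact: PC_or.
Qed.

Lemma PosComb_sent (P : form L -> Prop) k phi :
  PosComb (fun x => P x /\ closed_at k x) phi -> closed_at k phi.
Proof. by elim=> [x [_ H]|x y _ H1 _ H2|x y _ H1 _ H2] //=. Qed.

End Gen.

Lemma PosComb_map (L1 L2 : Lang) (P : form L1 -> Prop) (Q : form L2 -> Prop)
  (g : form L1 -> form L2) phi :
  (forall x y, g (Fand x y) = Fand (g x) (g y)) ->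
  (forall x y, g (For x y) = For (g x) (g y)) ->
  (forall x, P x -> Q (g x)) -> PosComb P phi -> PosComb Q (g phi).
Proof.
move=> Ha Ho H; elim=> [x Px|x y _ IHx _ IHy|x y _ IHx _ IHy].
- by apply: PC_base; apply: H.
- by rewrite Ha; apply: PC_and.
- by rewrite Ho; apply: PC_or.
Qed.

Section Subst.
Variable L : Lang.

Definition cst : term (Lc L) := @Tapp (Lc L) None (fun _ => Tvar 0).

Fixpoint sub_t (d : nat) (t : term L) : term (Lc L) :=
  match t with
  | Tvar k => if k == d then cst else Tvar k
  | Tapp f args => @Tapp (Lc L) (Some f) (fun i => sub_t d (args i))
  end.

Fixpoint sub (d : nat) (phi : form L) : form (Lc L) :=
  match phi with
  | Ftrue => Ftrue
  | Ffalse => Ffalse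
  | Feq t u => Feq (sub_t d t) (sub_t d u)
  | Frel r args => @Frel (Lc L) r (fun i => sub_t d (args i))
  | Fnot p => Fnot (sub d p)
  | Fand p q => Fand (sub d p) (sub d q)
  | For p q => For (sub d p) (sub d q)
  | Fex p => Fex (sub d.+1 p)
  | Fall p => Fall (sub d.+1 p)
  end.

Fixpoint unsub_t (d : nat) (t : term (Lc L)) : term L :=
  match t with
  | Tvar k => Tvar (if k < d then k else k.+1)
  | Tapp o args =>
      let ra := fun i => unsub_t d (args i) in
      match o return ('I_(@farity (Lc L) o) -> term L) -> term L with
      | Some f => fun ra => @Tapp L f ra
      | None => fun _ => Tvar d
      end ra
  end.

Fixpoint unsub (d : nat) (phi : form (Lc L)) : form L :=
  match phi with
  | Ftrue => Ftrue
  | Ffalse => Ffalse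
  | Feq t u => Feq (unsub_t d t) (unsub_t d u)
  | Frel r args => @Frel L r (fun i => unsub_t d (args i))
  | Fnot p => Fnot (unsub d p)
  | Fand p q => Fand (unsub d p) (unsub d q)
  | For p q => For (unsub d p) (unsub d q)
  | Fex p => Fex (unsub d.+1 p)
  | Fall p => Fall (unsub d.+1 p)
  end.

Definition upd (D : Type) (env : nat -> D) d (a : D) : nat -> D :=
  fun k => if k == d then a else env k.

Definition ins (D : Type) (env : nat -> D) d (a : D) : nat -> D :=
  fun k => if k < d then env k else if k == d then a else env k.-1.

Lemma eval_sub (M : Struc L) (a : dom M) env d t :
  @eval (Lc L) (expand a) env (sub_t d t) = @eval L M (upd env d a) t.
Proof.
elim: t => [k|f args IH] /=.
- by rewrite /upd; case: (k == d).
- by congr (finterp M f); apply: functional_extensionality => i; apply: IH.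
Qed.

Lemma sat_sub (M : Struc L) (a : dom M) phi : forall env d,
  @sat (Lc L) (expand a) env (sub d phi) <-> @sat L M (upd env d a) phi.
Proof.
elim: phi => [| |t u|r args|p IH|p IHp q IHq|p IHp q IHq|p IH|p IH] env d /=.
- by [].
- by [].
- by rewrite !eval_sub.
- have -> : (fun i => @eval (Lc L) (expand a) env (sub_t d (args i))) =
            (fun i => @eval L M (upd env d a) (args i)) by
    apply: functional_extensionality => i; apply: eval_sub.
  by [].
- by rewrite IH.
- by rewrite IHp IHq.
- by rewrite IHp IHq.
- have Hs : forall x : dom M, @sat L M (upd (scons x env) d.+1 a) p <-> @sat L M (scons x (upd env d a)) p.
    by move=> x; apply: sat_ext => -[|k] //=.
  by split=> [[x /IH /Hs Hx]|[x /Hs /IH Hx]]; exists x.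
- have Hs : forall x : dom M, @sat L M (upd (scons x env) d.+1 a) p <-> @sat L M (scons x (upd env d a)) p.
    by move=> x; apply: sat_ext => -[|k] //=.
  by split=> Hx x; [apply/Hs/IH|apply/IH/Hs].
Qed.

Lemma eval_unsub (M : Struc L) (a : dom M) env d t :
  @eval (Lc L) (expand a) env t = @eval L M (ins env d a) (unsub_t d t).
Proof.
elim: t => [k|[f|] args IH] /=.
- rewrite /ins; case: (ltnP k d) => Hk; first by rewrite Hk.
  have -> : (k.+1 < d) = false by apply/negbTE; rewrite -leqNgt; apply: leqW.
  by have -> : (k.+1 == d) = false by apply/negbTE; rewrite neq_ltn ltnS Hk orbT.
- by congr (finterp M f); apply: functional_extensionality => i; apply: IH.
- by rewrite /ins ltnn eqxx.
Qed.

Lemma sat_unsub (M : Struc L) (a : dom M) phi : forall env d,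
  @sat (Lc L) (expand a) env phi <-> @sat L M (ins env d a) (unsub d phi).
Proof.
elim: phi => [| |t u|r args|p IH|p IHp q IHq|p IHp q IHq|p IH|p IH] env d /=.
- by [].
- by [].
- by rewrite !(eval_unsub env d).
- have -> : (fun i => @eval (Lc L) (expand a) env (args i)) =
            (fun i => @eval L M (ins env d a) (unsub_t d (args i))) by
    apply: functional_extensionality => i; apply: eval_unsub.
  by [].
- by rewrite (IH env d).
- by rewrite (IHp env d) (IHq env d).
- by rewrite (IHp env d) (IHq env d).
- have Hs : forall x : dom M, @sat L M (ins (scons x env) d.+1 a) (unsub d.+1 p) <->
      @sat L M (scons x (ins env d a)) (unsub d.+1 p).
    move=> x; apply: sat_ext => -[|m] //=; rewrite /ins ltnS eqSS.
    case: ltnP => Hmd //=; case: eqP => Hme //; case: m Hmd Hme => [|m] //=.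
    by rewrite leqn0 => /eqP ->.
  by split=> [[x /(IH _ d.+1) /Hs Hx]|[x /Hs /(IH _ d.+1) Hx]]; exists x.
- have Hs : forall x : dom M, @sat L M (ins (scons x env) d.+1 a) (unsub d.+1 p) <->
      @sat L M (scons x (ins env d a)) (unsub d.+1 p).
    move=> x; apply: sat_ext => -[|m] //=; rewrite /ins ltnS eqSS.
    case: ltnP => Hmd //=; case: eqP => Hme //; case: m Hmd Hme => [|m] //=.
    by rewrite leqn0 => /eqP ->.
  by split=> Hx x; [apply/Hs/(IH _ d.+1)|apply/(IH _ d.+1)/Hs].
Qed.

Lemma closed_sub_t d t : closed_term d.+1 t -> closed_term d (sub_t d t).
Proof.
elim: t => [k|f args IH] /=.
- case: eqP => [_ _|Hne Hk]; first by case.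
  by rewrite /= ltn_neqAle; apply/andP; split; [apply/eqP|].
- by move=> H i; apply: IH.
Qed.

Lemma closed_sub phi : forall d, closed_at d.+1 phi -> closed_at d (sub d phi).
Proof.
elim: phi => [| |t u|r args|p IH|p IHp q IHq|p IHp q IHq|p IH|p IH] d //=.
- by case=> H1 H2; split; apply: closed_sub_t.
- by move=> H i; apply: closed_sub_t.
- exact: IH.
- by case=> H1 H2; split; [apply: IHp|apply: IHq].
- by case=> H1 H2; split; [apply: IHp|apply: IHq].
- exact: IH.
- exact: IH.
Qed.

Lemma closed_unsub_t d t : closed_term d t -> closed_term d.+1 (unsub_t d t).
Proof.
elim: t => [k|[f|] args IH] /=.
- by move=> Hk; rewrite Hk ltnS ltnW.
- by move=> H i; apply: IH.
- by move=> _.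
Qed.

Lemma closed_unsub phi : forall d, closed_at d phi -> closed_at d.+1 (unsub d phi).
Proof.
elim: phi => [| |t u|r args|p IH|p IHp q IHq|p IHp q IHq|p IH|p IH] d //=.
- by case=> H1 H2; split; apply: closed_unsub_t.
- by move=> H i; apply: closed_unsub_t.
- exact: IH.
- by case=> H1 H2; split; [apply: IHp|apply: IHq].
- by case=> H1 H2; split; [apply: IHp|apply: IHq].
- exact: IH.
- exact: IH.
Qed.

Lemma qf_sub phi : forall d, qf phi -> qf (sub d phi).
Proof.
elim: phi => [| |t u|r args|p IH|p IHp q IHq|p IHp q IHq|p IH|p IH] d //=.
- exact: IH.
- by case=> H1 H2; split; [apply: IHp|apply: IHq].
- by case=> H1 H2; split; [apply: IHp|apply: IHq].
Qed.

Lemma qf_unsub phi : forall d, qf phi -> qf (unsub d phi).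
Proof.
elim: phi => [| |t u|r args|p IH|p IHp q IHq|p IHp q IHq|p IH|p IH] d //=.
- exact: IH.
- by case=> H1 H2; split; [apply: IHp|apply: IHq].
- by case=> H1 H2; split; [apply: IHp|apply: IHq].
Qed.

Lemma En_sub m : forall phi d, En m phi -> En m (sub d phi).
Proof.
elim: m => [|m IH] phi d /=; first exact: qf_sub.
case=> [H|[psi [-> H]]]; [left|right].
- by apply: (PosComb_map (g := sub d)) H => // x /IH; apply.
- exists (sub d.+1 psi); split => //.
  by apply: (PosComb_map (g := sub d.+1)) H => // x /IH; apply.
Qed.

Lemma En_unsub m : forall phi d, En m phi -> En m (unsub d phi).
Proof.
elim: m => [|m IH] phi d /=; first exact: qf_unsub.
case=> [H|[psi [-> H]]]; [left|right].
- by apply: (PosComb_map (g := unsub d)) H => // x /IH; apply.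
- exists (unsub d.+1 psi); split => //.
  by apply: (PosComb_map (g := unsub d.+1)) H => // x /IH; apply.
Qed.
End Subst.

Lemma satE (L : Lang) (M : Struc L) (phi : form L) (e1 e2 : nat -> dom M) :
  sat e1 phi -> (forall k, e1 k = e2 k) -> sat e2 phi.
Proof. by move=> H He; apply/(sat_ext phi (e1 := e1) (e2 := e2)). Qed.

Section Ultra.
Variables (L : Lang) (N : Struc L) (I : Type) (U : (I -> Prop) -> Prop).
Hypothesis UI : forall A B, U A -> U B -> U (fun i => A i /\ B i).
Hypothesis US : forall A B : I -> Prop, (forall i, A i -> B i) -> U A -> U B.
Hypothesis Une : forall A, U A -> exists i, A i.
Hypothesis Uu : forall A, U A \/ U (fun i => ~ A i).

Lemma UT : U (fun _ => True).
Proof. by case: (Uu (fun _ => True)) => H; apply: US H. Qed.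

Lemma Unot A : U (fun i => ~ A i) <-> ~ U A.
Proof.
split.
- move=> H1 H2; have [i [] //] := Une (UI H2 H1).
- by case: (Uu A).
Qed.

Lemma Ufin k (S : 'I_k -> I -> Prop) : (forall j, U (S j)) -> U (fun i => forall j, S j i).
Proof.
move=> HS.
suff H : forall m, U (fun i => forall j : 'I_k, j < m -> S j i).
  by apply: US (H k) => i Hi j; apply: Hi; apply: ltn_ord.
elim=> [|m IH]; first by apply: US UT => i _ j.
case: (ltnP m k) => Hmk.
- apply: US (UI IH (HS (Ordinal Hmk))) => i [H1 H2] j.
  rewrite ltnS leq_eqVlt => /orP [/eqP Hj|]; last exact: H1.
  by have -> : j = Ordinal Hmk by apply: val_inj.
- apply: US IH => i H j Hj; apply: H; exact: leq_trans (ltn_ord j) Hmk.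
Qed.

Definition rel (f g : I -> dom N) : Prop := U (fun i => f i = g i).

Lemma rel_refl f : rel f f.
Proof. by apply: US UT. Qed.
Lemma rel_sym f g : rel f g -> rel g f.
Proof. by apply: US. Qed.
Lemma rel_trans f g h : rel f g -> rel g h -> rel f h.
Proof. by move=> H1 H2; apply: US (UI H1 H2) => i [-> ->]. Qed.

Definition Q := {P : (I -> dom N) -> Prop | exists f, P = rel f}.
Definition cls (f : I -> dom N) : Q := exist _ (rel f) (ex_intro _ f erefl).

Lemma cls_eq f g : cls f = cls g <-> rel f g.
Proof.
split.
- move=> /(f_equal (@proj1_sig _ _)) /= E.
  by rewrite E; apply: rel_refl.
- move=> H.
  have E : rel f = rel g.
    apply: functional_extensionality => h; apply: propositional_extensionality.
    split=> H'; [apply: rel_trans (rel_sym H) H'|apply: rel_trans H H'].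
  by apply: (@eq_sig _ _ (cls f) (cls g) E); apply: proof_irrelevance.
Qed.

Definition rep (x : Q) : I -> dom N :=
  proj1_sig (constructive_indefinite_description _ (proj2_sig x)).

Lemma cls_rep x : cls (rep x) = x.
Proof.
rewrite /rep; case: (constructive_indefinite_description _ _) => f Hf /=.
have E : proj1_sig (cls f) = proj1_sig x by rewrite /= Hf.
by apply: (@eq_sig _ _ (cls f) x E); apply: proof_irrelevance.
Qed.

Lemma rep_cls f : rel (rep (cls f)) f.
Proof. by apply/cls_eq; rewrite cls_rep. Qed.

Definition Q_inh : inhabited Q :=
  match dom_inhabited N with inhabits d0 => inhabits (cls (fun _ => d0)) end.

Definition UP : Struc L := {|
  dom := Q;
  dom_inhabited := Q_inh;
  finterp := fun f args => cls (fun i => finterp N f (fun j => rep (args j) i));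
  rinterp := fun r args => U (fun i => rinterp N r (fun j => rep (args j) i)) |}.

Lemma los_eval (F : nat -> I -> dom N) t :
  @eval L UP (fun k => cls (F k)) t = cls (fun i => eval (fun k => F k i) t).
Proof.
elim: t => [k|f args IH] //=.
apply/cls_eq; apply: US (Ufin (fun j => rep_cls (fun i => eval (fun k => F k i) (args j)))).
move=> i Hi /=; congr (finterp N f); apply: functional_extensionality => j.
by rewrite IH; apply: Hi.
Qed.

Lemma los (phi : form L) : forall (F : nat -> I -> dom N),
  @sat L UP (fun k => cls (F k)) phi <-> U (fun i => sat (fun k => F k i) phi).
Proof.
elim: phi => [| |t u|r args|p IH|p IHp q IHq|p IHp q IHq|p IH|p IH] F /=.
- by split=> // _; apply: UT.
- by split=> // /Une [].
- by rewrite !los_eval cls_eq.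
- have HU := Ufin (fun j => rep_cls (fun i => eval (fun k => F k i) (args j))).
  have E : forall i, (forall j, rep (cls (fun i => eval (fun k => F k i) (args j))) i =
                                eval (fun k => F k i) (args j)) ->
      (fun j => rep (@eval L UP (fun k => cls (F k)) (args j)) i) =
      (fun j => eval (fun k => F k i) (args j)).
    move=> i Hi; apply: functional_extensionality => j; by rewrite los_eval Hi.
  split=> H.
  + by apply: US (UI H HU) => i [H1 /E <-].
  + by apply: US (UI H HU) => i [H1 /E ->].
- by rewrite IH Unot.
- rewrite IHp IHq; split; first by case; apply: UI.
  by move=> H; split; apply: US H => i [].
- rewrite IHp IHq; split.
  + by case=> H; apply: US H => i H'; [left|right].
  + move=> H; case: (Uu (fun i => sat (fun k => F k i) p)) => Hp; first by left.
    by right; apply: US (UI H Hp) => i [[]].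
- split.
  + case=> x Hx.
    have Hx' : @sat L UP (fun k => cls (scons (rep x) F k)) p.
      by apply: (satE Hx) => -[|k] //=; rewrite cls_rep.
    move/IH: Hx'; apply: US => i Hi; exists (rep x i).
    by apply: (satE Hi) => -[|k].
  + move=> H.
    have [g Hg] : exists g : I -> dom N, forall i,
        (exists y, sat (scons y (fun k => F k i)) p) -> sat (scons (g i) (fun k => F k i)) p.
      have Hc : forall i, exists y : dom N, (exists y, sat (scons y (fun k => F k i)) p) ->
          sat (scons y (fun k => F k i)) p.
        move=> i; case: (classic (exists y, sat (scons y (fun k => F k i)) p)) => [[y Hy]|Hn].
        * by exists y.
        * by case: (Une H) => i0 [y0 _]; exists y0 => /Hn.
      exists (fun i => proj1_sig (constructive_indefinite_description _ (Hc i))).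
      by move=> i; case: (constructive_indefinite_description _ _).
    exists (cls g).
    have : U (fun i => sat (fun k => scons g F k i) p).
      apply: US H => i /Hg Hi; apply: (satE Hi) => -[|k] //.
    move/IH => Hs; by apply: (satE Hs) => -[|k].
- split.
  + move=> H; case: (Uu (fun i => forall y, sat (scons y (fun k => F k i)) p)) => // Hn.
    exfalso.
    have [g Hg] : exists g : I -> dom N, forall i,
        (~ forall y, sat (scons y (fun k => F k i)) p) -> ~ sat (scons (g i) (fun k => F k i)) p.
      have Hc : forall i, exists y : dom N, (~ forall y, sat (scons y (fun k => F k i)) p) ->
          ~ sat (scons y (fun k => F k i)) p.
        move=> i; case: (classic (forall y, sat (scons y (fun k => F k i)) p)) => Ha.
        * by case: (Une Hn) => i0 _; case: (dom_inhabited N) => y0; exists y0.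
        * by move: (not_all_ex_not _ _ Ha) => [y Hy]; exists y.
      exists (fun i => proj1_sig (constructive_indefinite_description _ (Hc i))).
      by move=> i; case: (constructive_indefinite_description _ _).
    have : @sat L UP (fun k => cls (scons g F k)) p.
      by apply: (satE (H (cls g))) => -[|k].
    move/IH => Hs.
    have [i [Hi1 Hi2]] := Une (UI Hs Hn).
    apply: (Hg i Hi2); by apply: (satE Hi1) => -[|k].
  + move=> H x.
    have : U (fun i => sat (fun k => scons (rep x) F k i) p).
      by apply: US H => i Hi; apply: (satE (Hi (rep x i))) => -[|k].
    move/IH => Hs; apply: (satE Hs) => -[|k] //=; by rewrite cls_rep.
Qed.

Lemma diag_elem : elementary_embedding (fun y : dom N => cls (fun _ => y)) (Nstar := UP).
Proof.
move=> phi env.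
rewrite (los phi (fun k _ => env k)); split.
- by move=> H; apply: US UT.
- by move=> /Une [].
Qed.

End Ultra.

Lemma En_true (L : Lang) n : En n (@Ftrue L).
Proof. by elim: n => [|n IH] //=; left; apply: PC_base. Qed.

Lemma backward (L : Lang) (M N : Struc L) (n : nat) :
  (forall a : dom M,
     exists (Nstar : Struc L) (h : dom N -> dom Nstar),
       elementary_embedding h /\
       exists b : dom Nstar, ThE_incl n (expand a) (expand b)) ->
  ThE_incl n.+1 M N.
Proof.
move=> H.
have KL : forall chi, PosComb (En n) chi -> closed_at 1 chi -> forall (a : dom M) e,
    sat (scons a e) chi -> exists (Nstar : Struc L) (h : dom N -> dom Nstar),
       elementary_embedding h /\ exists b : dom Nstar, forall e', sat (scons b e') chi.
  move=> chi Hpc Hcl a e Hsat.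
  have [Nstar [h [Hh [b Hb]]]] := H a.
  exists Nstar, h; split => //; exists b => e'.
  have HT : ThE n (expand a) (sub 0 chi).
    split.
    - apply: (PosComb_map (g := sub 0)) (PosComb_closed Hpc Hcl) => // x [H1 H2].
      by split; [apply: En_sub|apply: closed_sub].
    - move=> env; apply/sat_sub; apply: (proj1 (sat_closed Hcl _)) Hsat.
      by case.
  have [_ /(_ e')] := Hb _ HT.
  move/sat_sub; move/(sat_closed Hcl (e2 := scons b e')); apply; by case.
move=> phi [Hpc Htr]; split => //.
elim: Hpc Htr => [psi [HE Hs]|p q Hp IHp Hq IHq|p q Hp IHp Hq IHq].
- move=> Htr; case: (dom_inhabited M) => a0.
  case: HE => [Hpc|[chi [Epsi Hpc]]].
  + have Hcl : closed_at 1 psi by apply: (closed_mono (k := 0)).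
    have [Nstar [h [Hh [b Hb]]]] := KL psi Hpc Hcl a0 (fun _ => a0) (Htr _).
    move=> env; apply/Hh; apply: (proj1 (sat_closed Hs _)) (Hb (fun _ => b)); by [].
  + subst psi; rewrite /sentence /= in Hs.
    have [a Ha] := Htr (fun _ => a0).
    have [Nstar [h [Hh [b Hb]]]] := KL chi Hpc Hs a _ Ha.
    move=> env; apply/Hh; exists b; apply: Hb.
- move=> Htr; have H1 : true_in M p by move=> e; case: (Htr e).
  have H2 : true_in M q by move=> e; case: (Htr e).
  by move=> e; split; [apply: IHp|apply: IHq].
- move=> Htr; case: (dom_inhabited M) => a0.
  have Hsp := PosComb_sent Hp; have Hsq := PosComb_sent Hq.
  case: (Htr (fun _ => a0)) => Hs.
  + have H1 : true_in M p by move=> e; apply: (proj1 (sat_closed Hsp _)) Hs.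
    by move=> e; left; apply: IHp.
  + have H1 : true_in M q by move=> e; apply: (proj1 (sat_closed Hsq _)) Hs.
    by move=> e; right; apply: IHq.
Qed.

Lemma forward (L : Lang) (M N : Struc L) (n : nat) :
  ThE_incl n.+1 M N ->
  (forall a : dom M,
     exists (Nstar : Struc L) (h : dom N -> dom Nstar),
       elementary_embedding h /\
       exists b : dom Nstar, ThE_incl n (expand a) (expand b)).
Proof.
move=> Hinc a; case: (dom_inhabited N) => d0.
pose e0 := fun _ : nat => d0.
pose T := fun psi => ThE n (expand a) psi.
have W : forall psi, T psi -> exists x, sat (scons x e0) (unsub 0 psi).
  move=> psi [Hpc Htr].
  have Hs : closed_at 0 psi := PosComb_sent Hpc.
  have HT : ThE n.+1 M (Fex (unsub 0 psi)).
    split.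
    - apply: PC_base; split; last exact: closed_unsub.
      right; exists (unsub 0 psi); split => //.
      by apply: (PosComb_map (g := unsub 0)) Hpc => // x [H1 _]; apply: En_unsub.
    - move=> env; exists a; have := Htr env; move/(sat_unsub _ _ 0).
      by move/sat_ext; apply => -[|k].
  by have [_ /(_ e0)] := Hinc _ HT.
have [b Hb] : exists b : form (Lc L) -> dom N, forall psi, T psi ->
    sat (scons (b psi) e0) (unsub 0 psi).
  have Hc : forall psi, exists x, T psi -> sat (scons x e0) (unsub 0 psi).
    move=> psi; case: (classic (T psi)) => HT.
    + by have [x Hx] := W _ HT; exists x.
    + by exists d0.
  exists (fun psi => proj1_sig (constructive_indefinite_description _ (Hc psi))).
  by move=> psi; case: (constructive_indefinite_description _ _).
pose A := fun phi i => T i /\ sat (scons (b i) e0) (unsub 0 phi).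
pose F := fun S : form (Lc L) -> Prop => exists phi, T phi /\ forall i, A phi i -> S i.
have TT : T Ftrue by split; [apply: PC_base; split; [apply: En_true|]|].
have TA : forall p q, T p -> T q -> T (Fand p q).
  move=> p q [H1 H2] [H3 H4]; split; first exact: PC_and.
  by move=> e; split.
have [U [FU UI US Une Uu]] := @ultra_ex _ F
  (ex_intro _ Ftrue (conj TT (fun _ _ => I)))
  (fun S1 S2 '(ex_intro p (conj Hp H1)) '(ex_intro q (conj Hq H2)) =>
     ex_intro _ (Fand p q) (conj (TA p q Hp Hq)
       (fun i '(conj Ti (conj s1 s2)) => conj (H1 i (conj Ti s1)) (H2 i (conj Ti s2)))))
  (fun S1 S2 HS '(ex_intro p (conj Hp H1)) =>
     ex_intro _ p (conj Hp (fun i Hi => HS i (H1 i Hi))))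
  (fun S1 '(ex_intro p (conj Hp H1)) => ex_intro _ p (H1 p (conj Hp (Hb p Hp)))).
exists (UP N U), (fun y => cls U (fun _ => y)); split.
  exact: (diag_elem UI US Une Uu).
exists (cls U b) => phi [Hpc Htr]; split => // env.
have Hs : closed_at 0 phi := PosComb_sent Hpc.
apply/(sat_unsub _ _ 0).
pose G := scons b (fun k => rep (U:=U) (env k)).
have : @sat L (UP N U) (fun k => cls U (G k)) (unsub 0 phi).
  apply/(los UI US Une Uu).
  have HA : U (A phi) by apply: FU; exists phi; split.
  apply: US HA => i [_ Hi].
  apply: (proj1 (sat_closed (closed_unsub Hs) _)) Hi; by case.
move/sat_ext; apply => -[|k] //=; rewrite /G /= ?cls_rep //.
Qed.

Theorem proposition6p1 (L : Lang) (M N : Struc L) (n : nat) :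
  ThE_incl n.+1 M N <->
  (forall a : dom M,
     exists (Nstar : Struc L) (h : dom N -> dom Nstar),
       elementary_embedding h /\
       exists b : dom Nstar, ThE_incl n (expand a) (expand b)).
Proof. split; [exact: forward|exact: backward]. Qed.
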